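(* Let $\gamma(t,s)$ be a smooth solution of $\gamma_t=\gamma_s\times\gamma_{ss}$ in $\mathrm{Im}(\mathbb O)$ with $|\gamma_s|=1$, $k_1>0$, $\kappa_2>0$ everywhere, and suppose $\varphi_3=0$ and $\varphi_2\neq0$. Then the coefficients of the second fundamental form of the surface $\Sigma$ swept by $\gamma$ with respect to the frame $\tilde E_1,\dots,\tilde E_7$ satisfy $\tilde h^6_{ij}=\tilde h^7_{ij}=0$ for all $i,j\in\{1,2\}$; that is, the normal bundle of $\Sigma$ is flat in the directions $\tilde E_6,\tilde E_7$.
   Context: $\mathbb O$: octonions (product $(a+bl)(c+dl)=(ac-d\bar b)+(\bar a d+cb)l$ for quaternions), $\langle x,y\rangle=\frac12(\bar xy+\bar yx)$, $\mathrm{Im}(\mathbb O)\cong\mathbb R^7$, $x\times y=\frac12(\bar yx-\bar xy)$. For each $t$ (with $s$ in an interval containing $0$): $I_4=\gamma_s$, $k_1=\|\gamma_{ss}\|$, $I_1=I_{4s}/k_1$, $I_5=I_1\times I_4$, $\kappa_2=\sqrt{\|I_{1s}\|^2-\langle I_{1s},I_4\rangle^2-\langle I_{1s},I_5\rangle^2}$, $I_2=\kappa_2^{-1}(I_{1s}-\langle I_{1s},I_4\rangle I_4-\langle I_{1s},I_5\rangle I_5)$, $I_3=I_1\times I_2$, $I_6=I_2\times I_4$, $I_7=I_3\times I_4$; $\rho_1=\langle I_{1s},I_5\rangle$, $\rho_2=\langle I_{2s},I_6\rangle$, $\alpha=\langle I_{2s},I_3\rangle$, $\beta_1=\langle I_{2s},I_7\rangle$,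 $\beta_2=\langle I_{3s},I_6\rangle$; $r=\frac1{\sqrt2}e^{-\sqrt{-1}\int_0^s\rho_1}$, $q=\frac1{\sqrt2}e^{-\sqrt{-1}\int_0^s\rho_2}$; $\varphi_1=k_1\overline r$, $\varphi_2=2\kappa_2r\overline q$, $\varphi_3=-\sqrt2q^2r[2\alpha+\sqrt{-1}(\beta_1+\beta_2)]$. Frame of $\Sigma$: $E_1=\gamma_s=I_4$, $E_2=\gamma_t/k_1=-I_5$, $E_3=I_1$, $E_4=I_2$, $E_5=I_6$, $E_6=I_3$, $E_7=I_7$, coframe $\omega^1=ds$, $\omega^2=\sqrt2|\varphi_1|dt$; for an orthonormal frame $(F_i)$ with $F_1=E_1$, $F_2=E_2$, coefficients $h^\alpha_{ij}$ are defined by $dF_i=\sum_{k\le2}\omega_i^kF_k+\sum_{\alpha\ge3}\omega_i^\alpha F_\alpha$, $\omega_i^\alpha=\sum_jh^\alpha_{ij}\omega^j$. Let $h^\alpha_{ij}$ be these for $F=E$, set $\theta=\arccos\frac{h^4_{22}}{\sqrt{(h^4_{22})^2+\frac94|\varphi_2|^2}}$, $\tilde E_i=E_i$ for $i\neq4,7$, $\tilde E_4=\cos\theta E_4-\sin\theta E_7$, $\tilde E_7=\sin\theta E_4+\cos\theta E_7$, and let $\tilde h^\alpha_{ij}$ be the coefficients for $F=\tilde E$. *)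

(* Defs.v *)
From Stdlib Require Import Reals.
From Coquelicot Require Import Coquelicot.
Open Scope R_scope.

Record quat := Qt { q0 : R; q1 : R; q2 : R; q3 : R }.

Definition qadd (a b : quat) : quat :=
  Qt (q0 a + q0 b) (q1 a + q1 b) (q2 a + q2 b) (q3 a + q3 b).
Definition qopp (a : quat) : quat := Qt (- q0 a) (- q1 a) (- q2 a) (- q3 a).
Definition qsub (a b : quat) : quat := qadd a (qopp b).
Definition qscale (c : R) (a : quat) : quat :=
  Qt (c * q0 a) (c * q1 a) (c * q2 a) (c * q3 a).
Definition qconj (a : quat) : quat := Qt (q0 a) (- q1 a) (- q2 a) (- q3 a).
(* (a0 + a1 i + a2 j + a3 k)(b0 + b1 i + b2 j + b3 k), i^2=j^2=k^2=ijk=-1 *)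
Definition qmul (a b : quat) : quat :=
  Qt (q0 a * q0 b - q1 a * q1 b - q2 a * q2 b - q3 a * q3 b)
     (q0 a * q1 b + q1 a * q0 b + q2 a * q3 b - q3 a * q2 b)
     (q0 a * q2 b - q1 a * q3 b + q2 a * q0 b + q3 a * q1 b)
     (q0 a * q3 b + q1 a * q2 b - q2 a * q1 b + q3 a * q0 b).

(* ---------- Octonions a + b l, a b quaternions ---------- *)
Record oct := Oc { oa : quat; ob : quat }.

Definition oadd (x y : oct) : oct := Oc (qadd (oa x) (oa y)) (qadd (ob x) (ob y)).
Definition oopp (x : oct) : oct := Oc (qopp (oa x)) (qopp (ob x)).
Definition osub (x y : oct) : oct := oadd x (oopp y).
Definition oscale (c : R) (x : oct) : oct := Oc (qscale c (oa x)) (qscale c (ob x)).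
(* (a + b l)(c + d l) = (a c - d conj(b)) + (conj(a) d + c b) l *)
Definition omul (x y : oct) : oct :=
  Oc (qsub (qmul (oa x) (oa y)) (qmul (ob y) (qconj (ob x))))
     (qadd (qmul (qconj (oa x)) (ob y)) (qmul (oa y) (ob x))).
Definition oconj (x : oct) : oct := Oc (qconj (oa x)) (qopp (ob x)).
Definition ore (x : oct) : R := q0 (oa x).
Definition is_imag (x : oct) : Prop := ore x = 0.
(* <x,y> = 1/2 (conj(x) y + conj(y) x)  (a real octonion; we take its real part) *)
Definition oinner (x y : oct) : R :=
  ore (oscale (1/2) (oadd (omul (oconj x) y) (omul (oconj y) x))).
Definition onorm (x : oct) : R := sqrt (oinner x x).
Definition ocross (x y : oct) : oct :=
  oscale (1/2) (osub (omul (oconj y) x) (omul (oconj x) y)).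

Definition ocomp (x : oct) (k : nat) : R :=
  match k with
  | 0 => q0 (oa x) | 1 => q1 (oa x) | 2 => q2 (oa x) | 3 => q3 (oa x)
  | 4 => q0 (ob x) | 5 => q1 (ob x) | 6 => q2 (ob x) | _ => q3 (ob x)
  end.
Definition of_comps (f : nat -> R) : oct :=
  Oc (Qt (f 0%nat) (f 1%nat) (f 2%nat) (f 3%nat))
     (Qt (f 4%nat) (f 5%nat) (f 6%nat) (f 7%nat)).

Definition dS (g : R -> R -> oct) : R -> R -> oct :=
  fun t s => of_comps (fun k => Derive (fun u => ocomp (g t u) k) s).
Definition dT (g : R -> R -> oct) : R -> R -> oct :=
  fun t s => of_comps (fun k => Derive (fun u => ocomp (g u s) k) t).

Definition smooth_at (g : R -> R -> oct) (t s : R) : Prop :=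
  forall (k n : nat), ex_diff_n (fun t' s' => ocomp (g t' s') k) n t s.

Section Frame.
Variable gamma : R -> R -> oct.

Definition I4 : R -> R -> oct := dS gamma.
Definition k1 (t s : R) : R := onorm (dS (dS gamma) t s).
Definition I1 (t s : R) : oct := oscale (/ k1 t s) (dS I4 t s).
Definition I5 (t s : R) : oct := ocross (I1 t s) (I4 t s).
Definition kappa2 (t s : R) : R :=
  let v := dS I1 t s in
  sqrt (onorm v ^ 2 - oinner v (I4 t s) ^ 2 - oinner v (I5 t s) ^ 2).
Definition I2 (t s : R) : oct :=
  let v := dS I1 t s in
  oscale (/ kappa2 t s)
    (osub (osub v (oscale (oinner v (I4 t s)) (I4 t s)))
          (oscale (oinner v (I5 t s)) (I5 t s))).
Definition I3 (t s : R) : oct := ocross (I1 t s) (I2 t s).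
Definition I6 (t s : R) : oct := ocross (I2 t s) (I4 t s).
Definition I7 (t s : R) : oct := ocross (I3 t s) (I4 t s).

Definition rho1 (t s : R) : R := oinner (dS I1 t s) (I5 t s).
Definition rho2 (t s : R) : R := oinner (dS I2 t s) (I6 t s).
Definition alpha (t s : R) : R := oinner (dS I2 t s) (I3 t s).
Definition beta1 (t s : R) : R := oinner (dS I2 t s) (I7 t s).
Definition beta2 (t s : R) : R := oinner (dS I3 t s) (I6 t s).

Definition cexpmi (x : R) : C := (cos x, - sin x).
Definition rC (t s : R) : C :=
  Cmult (RtoC (/ sqrt 2)) (cexpmi (RInt (fun u => rho1 t u) 0 s)).
Definition qC (t s : R) : C :=
  Cmult (RtoC (/ sqrt 2)) (cexpmi (RInt (fun u => rho2 t u) 0 s)).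

Definition phi1 (t s : R) : C := Cmult (RtoC (k1 t s)) (Cconj (rC t s)).
Definition phi2 (t s : R) : C :=
  Cmult (RtoC (2 * kappa2 t s)) (Cmult (rC t s) (Cconj (qC t s))).
Definition phi3 (t s : R) : C :=
  Cmult (RtoC (- sqrt 2))
    (Cmult (Cmult (qC t s) (qC t s))
      (Cmult (rC t s) (2 * alpha t s, beta1 t s + beta2 t s))).

(* frame E_1..E_7 of Sigma (E_2 = gamma_t / k1 = - I_5) *)
Definition Eframe (i : nat) : R -> R -> oct :=
  match i with
  | 1 => I4
  | 2 => fun t s => oopp (I5 t s)
  | 3 => I1
  | 4 => I2
  | 5 => I6
  | 6 => I3
  | _ => I7
  end.

(* coefficients h^a_{ij} for an orthonormal frame F with F_1 = E_1, F_2 = E_2: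
   omega^1 = ds, omega^2 = sqrt 2 |phi1| dt, and omega_i^a = <dF_i, F_a>,
   so h^a_{i1} = <d_s F_i, F_a>, h^a_{i2} = <d_t F_i, F_a> / (sqrt 2 |phi1|). *)
Definition hcoef (F : nat -> R -> R -> oct) (a i j : nat) (t s : R) : R :=
  match j with
  | 1 => oinner (dS (F i) t s) (F a t s)
  | _ => oinner (dT (F i) t s) (F a t s) / (sqrt 2 * Cmod (phi1 t s))
  end.

Definition theta (t s : R) : R :=
  let h := hcoef Eframe 4 2 2 t s in
  acos (h / sqrt (h ^ 2 + 9 / 4 * Cmod (phi2 t s) ^ 2)).

Definition Etilde (i : nat) : R -> R -> oct :=
  match i with
  | 4 => fun t s => osub (oscale (cos (theta t s)) (Eframe 4 t s))
                         (oscale (sin (theta t s)) (Eframe 7 t s))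
  | 7 => fun t s => oadd (oscale (sin (theta t s)) (Eframe 4 t s))
                         (oscale (cos (theta t s)) (Eframe 7 t s))
  | _ => Eframe i
  end.

End Frame.

Definition in_rect (ta tb sa sb : Rbar) (t s : R) : Prop :=
  Rbar_lt ta (Finite t) /\ Rbar_lt (Finite t) tb /\
  Rbar_lt sa (Finite s) /\ Rbar_lt (Finite s) sb.

(* Main.v *)
Require Import Defs.
From Stdlib Require Import Reals Lra FunctionalExtensionality.
From Coquelicot Require Import Coquelicot.
Open Scope R_scope.

Ltac dest x := let a0 := fresh "a" in let a1 := fresh "a" in let a2 := fresh "a" in
  let a3 := fresh "a" in let a4 := fresh "a" in let a5 := fresh "a" in
  let a6 := fresh "a" in let a7 := fresh "a" in
  destruct x as [[a0 a1 a2 a3] [a4 a5 a6 a7]].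

Definition mkI (x1 x2 x3 x4 x5 x6 x7 : R) : oct := Oc (Qt 0 x1 x2 x3) (Qt x4 x5 x6 x7).

Ltac oalg := lazy beta iota zeta delta [q0 q1 q2 q3 oa ob mkI is_imag oinner onorm ocross ore osub oscale oadd omul oconj oopp
  qsub qadd qscale qconj qmul qopp] in *.

Lemma oct_eq : forall a0 a1 a2 a3 a4 a5 a6 a7 b0 b1 b2 b3 b4 b5 b6 b7,
  a0 = b0 -> a1 = b1 -> a2 = b2 -> a3 = b3 -> a4 = b4 -> a5 = b5 -> a6 = b6 -> a7 = b7 ->
  Oc (Qt a0 a1 a2 a3) (Qt a4 a5 a6 a7) = Oc (Qt b0 b1 b2 b3) (Qt b4 b5 b6 b7).
Proof. intros; subst; reflexivity. Qed.

Ltac oeq := oalg; apply oct_eq; field.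


Lemma cross_expl : forall x1 x2 x3 x4 x5 x6 x7 y1 y2 y3 y4 y5 y6 y7,
  ocross (mkI x1 x2 x3 x4 x5 x6 x7) (mkI y1 y2 y3 y4 y5 y6 y7) =
  mkI (x2*y3 - x3*y2 - x4*y5 + x5*y4 - x6*y7 + x7*y6)
      (- x1*y3 + x3*y1 - x4*y6 + x5*y7 + x6*y4 - x7*y5)
      (x1*y2 - x2*y1 - x4*y7 - x5*y6 + x6*y5 + x7*y4)
      (x1*y5 + x2*y6 + x3*y7 - x5*y1 - x6*y2 - x7*y3)
      (- x1*y4 - x2*y7 + x3*y6 + x4*y1 - x6*y3 + x7*y2)
      (x1*y7 - x2*y4 - x3*y5 + x4*y2 + x5*y3 - x7*y1)
      (- x1*y6 + x2*y5 - x3*y4 + x4*y3 - x5*y2 + x6*y1).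
Proof. intros; unfold mkI; oalg; apply oct_eq; field. Qed.

Lemma inner_expl : forall x1 x2 x3 x4 x5 x6 x7 y1 y2 y3 y4 y5 y6 y7,
  oinner (mkI x1 x2 x3 x4 x5 x6 x7) (mkI y1 y2 y3 y4 y5 y6 y7) =
  x1*y1 + x2*y2 + x3*y3 + x4*y4 + x5*y5 + x6*y6 + x7*y7.
Proof. intros; unfold mkI; oalg; field. Qed.

Ltac dimag x H := let a0 := fresh "a" in let a1 := fresh "a" in let a2 := fresh "a" in
  let a3 := fresh "a" in let a4 := fresh "a" in let a5 := fresh "a" in
  let a6 := fresh "a" in let a7 := fresh "a" in
  destruct x as [[a0 a1 a2 a3] [a4 a5 a6 a7]];
  unfold is_imag, ore in H; cbn [q0 oa] in H; subst a0;
  change (Oc (Qt 0 a1 a2 a3) (Qt a4 a5 a6 a7)) with (mkI a1 a2 a3 a4 a5 a6 a7).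

Ltac xalg := repeat rewrite cross_expl; repeat rewrite inner_expl; unfold mkI.

Lemma alt_id : forall x y z, is_imag x -> is_imag y -> is_imag z ->
  oadd (ocross x (ocross y z)) (ocross (ocross x y) z) =
  osub (oscale (2 * oinner x z) y) (oadd (oscale (oinner x y) z) (oscale (oinner y z) x)).
Proof. intros x y z Hx Hy Hz; dimag x Hx; dimag y Hy; dimag z Hz.
  xalg; oalg; apply oct_eq; ring. Qed.

Lemma phi_cyc : forall x y z, is_imag x -> is_imag y -> is_imag z ->
  oinner (ocross x y) z = oinner (ocross y z) x.
Proof. intros x y z Hx Hy Hz; dimag x Hx; dimag y Hy; dimag z Hz.
  xalg; ring. Qed.

Lemma cross_cross : forall x y, is_imag x -> is_imag y ->
  ocross x (ocross x y) = osub (oscale (oinner x y) x) (oscale (oinner x x) y).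
Proof. intros x y Hx Hy; dimag x Hx; dimag y Hy.
  xalg; oalg; apply oct_eq; ring. Qed.

Lemma icc : forall x y w, is_imag x -> is_imag y -> is_imag w ->
  oinner (ocross x y) (ocross x w) = oinner x x * oinner y w - oinner x y * oinner x w.
Proof. intros x y w Hx Hy Hw; dimag x Hx; dimag y Hy; dimag w Hw.
  xalg; ring. Qed.

Lemma cross_orth_l : forall x y, is_imag x -> is_imag y -> oinner (ocross x y) x = 0.
Proof. intros x y Hx Hy; dimag x Hx; dimag y Hy. xalg; ring. Qed.
Lemma cross_orth_r : forall x y, is_imag x -> is_imag y -> oinner (ocross x y) y = 0.
Proof. intros x y Hx Hy; dimag x Hx; dimag y Hy. xalg; ring. Qed.

Lemma oinner_sym : forall x y, oinner x y = oinner y x.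
Proof. intros x y; dest x; dest y; oalg; field. Qed.
Lemma oinner_addl : forall x y z, oinner (oadd x y) z = oinner x z + oinner y z.
Proof. intros x y z; dest x; dest y; dest z; oalg; field. Qed.
Lemma oinner_addr : forall x y z, oinner z (oadd x y) = oinner z x + oinner z y.
Proof. intros x y z; dest x; dest y; dest z; oalg; field. Qed.
Lemma oinner_subl : forall x y z, oinner (osub x y) z = oinner x z - oinner y z.
Proof. intros x y z; dest x; dest y; dest z; oalg; field. Qed.
Lemma oinner_subr : forall x y z, oinner z (osub x y) = oinner z x - oinner z y.
Proof. intros x y z; dest x; dest y; dest z; oalg; field. Qed.
Lemma oinner_scalel : forall c x z, oinner (oscale c x) z = c * oinner x z.
Proof. intros c x z; dest x; dest z; oalg; field. Qed.
Lemma oinner_scaler : forall c x z, oinner z (oscale c x) = c * oinner z x.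
Proof. intros c x z; dest x; dest z; oalg; field. Qed.
Lemma oinner_oppl : forall x z, oinner (oopp x) z = - oinner x z.
Proof. intros x z; dest x; dest z; oalg; field. Qed.
Lemma oinner_oppr : forall x z, oinner z (oopp x) = - oinner z x.
Proof. intros x z; dest x; dest z; oalg; field. Qed.
Lemma oinner_self_ge0 : forall x, 0 <= oinner x x.
Proof. intros x; dest x; oalg. nra. Qed.

Lemma cross_addl : forall x y z, ocross (oadd x y) z = oadd (ocross x z) (ocross y z).
Proof. intros x y z; dest x; dest y; dest z; oeq. Qed.
Lemma cross_addr : forall x y z, ocross z (oadd x y) = oadd (ocross z x) (ocross z y).
Proof. intros x y z; dest x; dest y; dest z; oeq. Qed.
Lemma cross_subl : forall x y z, ocross (osub x y) z = osub (ocross x z) (ocross y z).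
Proof. intros x y z; dest x; dest y; dest z; oeq. Qed.
Lemma cross_subr : forall x y z, ocross z (osub x y) = osub (ocross z x) (ocross z y).
Proof. intros x y z; dest x; dest y; dest z; oeq. Qed.
Lemma cross_scalel : forall c x z, ocross (oscale c x) z = oscale c (ocross x z).
Proof. intros c x z; dest x; dest z; oeq. Qed.
Lemma cross_scaler : forall c x z, ocross z (oscale c x) = oscale c (ocross z x).
Proof. intros c x z; dest x; dest z; oeq. Qed.
Lemma cross_anti : forall x y, ocross x y = oopp (ocross y x).
Proof. intros x y; dest x; dest y; oeq. Qed.
Lemma cross_self : forall x, ocross x x = oscale 0 x.
Proof. intros x; dest x; oeq. Qed.

Lemma imag_cross : forall x y, is_imag (ocross x y).
Proof. intros x y; dest x; dest y; oalg; field. Qed.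
Lemma imag_add : forall x y, is_imag x -> is_imag y -> is_imag (oadd x y).
Proof. intros x y; dest x; dest y; oalg; intros; subst; field. Qed.
Lemma imag_sub : forall x y, is_imag x -> is_imag y -> is_imag (osub x y).
Proof. intros x y; dest x; dest y; oalg; intros; subst; field. Qed.
Lemma imag_scale : forall c x, is_imag x -> is_imag (oscale c x).
Proof. intros c x; dest x; oalg; intros; subst; field. Qed.
Lemma imag_opp : forall x, is_imag x -> is_imag (oopp x).
Proof. intros x; dest x; oalg; intros; subst; field. Qed.
Lemma cross_oppl : forall x z, ocross (oopp x) z = oopp (ocross x z).
Proof. intros x z; dest x; dest z; oeq. Qed.
Lemma cross_oppr : forall x z, ocross z (oopp x) = oopp (ocross z x).
Proof. intros x z; dest x; dest z; oeq. Qed.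
Lemma oopp_oopp : forall x, oopp (oopp x) = x.
Proof. intros x; dest x; oeq. Qed.
Lemma oscale_inv : forall k x, k <> 0 -> oscale k (oscale (/ k) x) = x.
Proof. intros k x Hk; dest x; oalg; apply oct_eq; field; auto. Qed.
Lemma oscale_scale : forall a b x, oscale a (oscale b x) = oscale (a * b) x.
Proof. intros a b x; dest x; oeq. Qed.
Lemma oscale_1 : forall x, oscale 1 x = x.
Proof. intros x; dest x; oeq. Qed.

Lemma decomp_v : forall (v x y : oct) (a b k : R), k <> 0 ->
  v = oadd (oscale a x) (oadd (oscale b y)
        (oscale k (oscale (/k) (osub (osub v (oscale a x)) (oscale b y))))).
Proof. intros v x y a b k Hk; dest v; dest x; dest y; oalg; apply oct_eq; field; auto. Qed.

Lemma aux_c61 : forall X Y a b c,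
  oadd X Y = osub (oscale (2*0) a) (oadd (oscale 0 b) (oscale 0 c)) -> oopp X = Y.
Proof. intros X Y a b c; dest X; dest Y; dest a; dest b; dest c; oalg. intros H; injection H; intros.
  apply oct_eq; lra. Qed.

Record frame (i1 i2 i3 i4 i5 i6 i7 : oct) : Prop := {
  im1 : is_imag i1; im2 : is_imag i2; im3 : is_imag i3; im4 : is_imag i4;
  im5 : is_imag i5; im6 : is_imag i6; im7 : is_imag i7;
  n11 : oinner i1 i1 = 1; n22 : oinner i2 i2 = 1; n33 : oinner i3 i3 = 1;
  n44 : oinner i4 i4 = 1; n55 : oinner i5 i5 = 1; n66 : oinner i6 i6 = 1;
  n77 : oinner i7 i7 = 1;
  n12 : oinner i1 i2 = 0; n13 : oinner i1 i3 = 0; n14 : oinner i1 i4 = 0;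
  n15 : oinner i1 i5 = 0; n16 : oinner i1 i6 = 0; n17 : oinner i1 i7 = 0;
  n23 : oinner i2 i3 = 0; n24 : oinner i2 i4 = 0; n25 : oinner i2 i5 = 0;
  n26 : oinner i2 i6 = 0; n27 : oinner i2 i7 = 0;
  n34 : oinner i3 i4 = 0; n35 : oinner i3 i5 = 0; n36 : oinner i3 i6 = 0;
  n37 : oinner i3 i7 = 0;
  n45 : oinner i4 i5 = 0; n46 : oinner i4 i6 = 0; n47 : oinner i4 i7 = 0;
  n56 : oinner i5 i6 = 0; n57 : oinner i5 i7 = 0;
  n67 : oinner i6 i7 = 0;
  c14 : ocross i1 i4 = i5; c12 : ocross i1 i2 = i3; c24 : ocross i2 i4 = i6;
  c34 : ocross i3 i4 = i7;
  c41 : ocross i4 i1 = oopp i5; c42 : ocross i4 i2 = oopp i6; c43 : ocross i4 i3 = oopp i7;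
  c45 : ocross i4 i5 = i1; c54 : ocross i5 i4 = oopp i1;
  c15 : ocross i1 i5 = oopp i4; c51 : ocross i5 i1 = i4;
  c61 : ocross i6 i1 = i7;
  p526 : oinner (ocross i5 i2) i6 = 0
}.

Lemma sqrt_eq1 : forall a, 0 <= a -> sqrt a = 1 -> a = 1.
Proof. intros a Ha H. rewrite <- (sqrt_sqrt a Ha), H. ring. Qed.

Lemma frame_alg (i1 i2 i3 i4 i5 i6 i7 v : oct) (kap : R) :
  is_imag i1 -> is_imag i4 -> is_imag v ->
  oinner i4 i4 = 1 -> oinner i1 i1 = 1 -> oinner i1 i4 = 0 -> oinner v i1 = 0 ->
  0 < kap -> kap ^ 2 = oinner v v - oinner v i4 ^ 2 - oinner v i5 ^ 2 ->
  i5 = ocross i1 i4 ->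
  i2 = oscale (/ kap) (osub (osub v (oscale (oinner v i4) i4)) (oscale (oinner v i5) i5)) ->
  i3 = ocross i1 i2 -> i6 = ocross i2 i4 -> i7 = ocross i3 i4 ->
  frame i1 i2 i3 i4 i5 i6 i7.
Proof.
  intros H1 H4 Hv N44 N11 N14 Nv1 Hk Hk2 e5 e2 e3 e6 e7.
  assert (I5 : is_imag i5) by (subst; apply imag_cross).
  assert (I3 : is_imag i3) by (subst; apply imag_cross).
  assert (I6 : is_imag i6) by (subst; apply imag_cross).
  assert (I7 : is_imag i7) by (subst; apply imag_cross).
  assert (I2 : is_imag i2) by (rewrite e2; repeat apply imag_scale || apply imag_sub; auto).
  assert (N41 : oinner i4 i1 = 0) by (rewrite oinner_sym; auto).
  assert (N15 : oinner i1 i5 = 0) by (rewrite e5, oinner_sym; apply cross_orth_l; auto).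
  assert (N45 : oinner i4 i5 = 0) by (rewrite e5, oinner_sym; apply cross_orth_r; auto).
  assert (N55 : oinner i5 i5 = 1) by (rewrite e5, icc; auto; rewrite N11, N44, N14; ring).
  assert (N51 : oinner i5 i1 = 0) by (rewrite oinner_sym; auto).
  assert (N54 : oinner i5 i4 = 0) by (rewrite oinner_sym; auto).
  assert (Hkne : kap <> 0) by lra.
  assert (N21 : oinner i2 i1 = 0).
  { rewrite e2, oinner_scalel, !oinner_subl, !oinner_scalel, Nv1, N41, N51. ring. }
  assert (N24 : oinner i2 i4 = 0).
  { rewrite e2, oinner_scalel, !oinner_subl, !oinner_scalel, N44, N54. ring. }
  assert (N25 : oinner i2 i5 = 0).
  { rewrite e2, oinner_scalel, !oinner_subl, !oinner_scalel, N45, N55. ring. }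
  assert (N22 : oinner i2 i2 = 1).
  { assert (Hw : oinner (osub (osub v (oscale (oinner v i4) i4)) (oscale (oinner v i5) i5))
                        (osub (osub v (oscale (oinner v i4) i4)) (oscale (oinner v i5) i5))
                 = oinner v v - oinner v i4 ^ 2 - oinner v i5 ^ 2).
    { rewrite !oinner_subl, !oinner_subr, !oinner_scalel, !oinner_scaler, N44, N55, N45, N54.
      rewrite (oinner_sym i4 v), (oinner_sym i5 v). ring. }
    rewrite e2, oinner_scalel, oinner_scaler, Hw, <- Hk2. field. auto. }
  assert (N12 : oinner i1 i2 = 0) by (rewrite oinner_sym; auto).
  assert (N42 : oinner i4 i2 = 0) by (rewrite oinner_sym; auto).
  assert (N52 : oinner i5 i2 = 0) by (rewrite oinner_sym; auto).
  assert (N31 : oinner i3 i1 = 0) by (rewrite e3; apply cross_orth_l; auto).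
  assert (N32 : oinner i3 i2 = 0) by (rewrite e3; apply cross_orth_r; auto).
  assert (N33 : oinner i3 i3 = 1) by (rewrite e3, icc; auto; rewrite N11, N22, N12; ring).
  assert (N61 : oinner i6 i1 = 0).
  { rewrite e6, phi_cyc; auto. rewrite cross_anti, oinner_oppl, <- e5, N52. ring. }
  assert (N34 : oinner i3 i4 = 0).
  { rewrite e3, phi_cyc, <- e6; auto. }
  assert (N35 : oinner i3 i5 = 0) by (rewrite e3, e5, icc; auto; rewrite N11, N24, N12, N14; ring).
  assert (N62 : oinner i6 i2 = 0) by (rewrite e6; apply cross_orth_l; auto).
  assert (N64 : oinner i6 i4 = 0) by (rewrite e6; apply cross_orth_r; auto).
  assert (N66 : oinner i6 i6 = 1) by (rewrite e6, icc; auto; rewrite N22, N44, N24; ring).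
  assert (N63 : oinner i6 i3 = 0).
  { rewrite e6, e3, (cross_anti i1 i2), oinner_oppr, icc; auto. rewrite N22, N41, N24, N21; ring. }
  assert (N65 : oinner i6 i5 = 0).
  { rewrite e6, e5, (cross_anti i2 i4), (cross_anti i1 i4), oinner_oppr, oinner_oppl, icc; auto.
    rewrite N44, N21, N42, N41; ring. }
  assert (N73 : oinner i7 i3 = 0) by (rewrite e7; apply cross_orth_l; auto).
  assert (N74 : oinner i7 i4 = 0) by (rewrite e7; apply cross_orth_r; auto).
  assert (N77 : oinner i7 i7 = 1) by (rewrite e7, icc; auto; rewrite N33, N44, N34; ring).
  assert (N71 : oinner i7 i1 = 0).
  { rewrite e7, phi_cyc; auto. rewrite cross_anti, <- e5, oinner_oppl, oinner_sym, N35. ring. }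
  assert (N72 : oinner i7 i2 = 0).
  { rewrite e7, phi_cyc; auto. rewrite cross_anti, <- e6, oinner_oppl, N63. ring. }
  assert (N75 : oinner i7 i5 = 0).
  { rewrite e7, e5, (cross_anti i3 i4), (cross_anti i1 i4), oinner_oppr, oinner_oppl, icc; auto.
    rewrite N44, N31, (oinner_sym i4 i3), N34, N41; ring. }
  assert (N76 : oinner i7 i6 = 0).
  { rewrite e7, e6, (cross_anti i3 i4), (cross_anti i2 i4), oinner_oppr, oinner_oppl, icc; auto.
    rewrite N44, N32, N42, (oinner_sym i4 i3), N34; ring. }
  assert (C41 : ocross i4 i1 = oopp i5) by (rewrite e5; apply cross_anti).
  assert (C42 : ocross i4 i2 = oopp i6) by (rewrite e6; apply cross_anti).
  assert (C43 : ocross i4 i3 = oopp i7) by (rewrite e7; apply cross_anti).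
  assert (C15 : ocross i1 i5 = oopp i4).
  { rewrite e5, cross_cross, N14, N11 by auto. dest i4; oeq. }
  assert (C51 : ocross i5 i1 = i4).
  { rewrite cross_anti, C15. dest i4; oeq. }
  assert (C45 : ocross i4 i5 = i1).
  { rewrite e5, (cross_anti i1 i4), cross_oppr, cross_cross, N41, N44 by auto.
    dest i1; dest i4; oeq. }
  assert (C54 : ocross i5 i4 = oopp i1) by (rewrite cross_anti, C45; reflexivity).
  assert (C61 : ocross i6 i1 = i7).
  { pose proof (alt_id i1 i2 i4 H1 I2 H4) as HA. rewrite <- e6, <- e3, <- e7, N14, N12, N24 in HA.
    rewrite cross_anti. apply aux_c61 in HA. exact HA. }
  assert (P526 : oinner (ocross i5 i2) i6 = 0).
  { rewrite phi_cyc, e6, cross_cross, N24, N22 by auto.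
    rewrite oinner_subl, !oinner_scalel, N25, N45. ring. }
  constructor; auto; try (rewrite oinner_sym; auto; fail).
  all: try (subst; reflexivity).
Qed.

Definition comps (f : R -> oct) : nat -> R -> R := fun k u => ocomp (f u) k.
Definition mk (a : nat -> R -> R) (u : R) : oct :=
  Oc (Qt (a 0%nat u) (a 1%nat u) (a 2%nat u) (a 3%nat u))
     (Qt (a 4%nat u) (a 5%nat u) (a 6%nat u) (a 7%nat u)).
Lemma mk_comps : forall f u, mk (comps f) u = f u.
Proof. intros f u; unfold mk, comps; destruct (f u) as [[] []]; reflexivity. Qed.
Lemma mk_comps_fun : forall f, (fun u => mk (comps f) u) = f.
Proof. intros f; extensionality u; apply mk_comps. Qed.

Definition odiff (f : R -> oct) (x : R) : Prop := forall k, ex_derive (comps f k) x.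
Definition odv (f : R -> oct) (x : R) : oct := of_comps (fun k => Derive (comps f k) x).

Lemma odiff_comps : forall f x, odiff f x -> forall k, ex_derive (comps f k) x.
Proof. auto. Qed.

Ltac solve_exd := repeat split; try exact I; match goal with
  | H : forall k, ex_derive (comps (fun u => mk ?a u) k) ?x |- ex_derive (fun y => ?a ?k y) ?x =>
      apply (ex_derive_ext (comps (fun u => mk a u) k)); [intros; reflexivity | apply H]
  | H : ex_derive ?c ?x |- ex_derive (fun y => ?c y) ?x => exact H
  end.

Ltac mkalg := lazy beta iota zeta delta [q0 q1 q2 q3 oa ob mk odv comps of_comps ocomp oinner
  onorm ocross ore osub oscale oadd omul oconj oopp qsub qadd qscale qconj qmul qopp].

Ltac dcomp := apply is_derive_unique; auto_derive; [solve_exd | try field].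

Ltac genf f Hf :=
  let a := fresh "a" in
  revert Hf; rewrite <- (mk_comps_fun f); cbv beta; unfold odiff;
  generalize (comps f) as a; intros a Hf.

Lemma odv_cross : forall f g x, odiff f x -> odiff g x ->
  odv (fun u => ocross (f u) (g u)) x = oadd (ocross (odv f x) (g x)) (ocross (f x) (odv g x)).
Proof.
  intros f g x Hf Hg. genf f Hf. genf g Hg.
  mkalg. apply oct_eq; dcomp.
Qed.

Lemma odv_add : forall f g x, odiff f x -> odiff g x ->
  odv (fun u => oadd (f u) (g u)) x = oadd (odv f x) (odv g x).
Proof. intros f g x Hf Hg. genf f Hf. genf g Hg. mkalg. apply oct_eq; dcomp. Qed.

Lemma odv_sub : forall f g x, odiff f x -> odiff g x ->
  odv (fun u => osub (f u) (g u)) x = osub (odv f x) (odv g x).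
Proof. intros f g x Hf Hg. genf f Hf. genf g Hg. mkalg. apply oct_eq; dcomp. Qed.

Lemma odv_opp : forall f x, odiff f x ->
  odv (fun u => oopp (f u)) x = oopp (odv f x).
Proof. intros f x Hf. genf f Hf. mkalg. apply oct_eq; dcomp. Qed.

Lemma odv_scale : forall (c : R -> R) f x, ex_derive c x -> odiff f x ->
  odv (fun u => oscale (c u) (f u)) x = oadd (oscale (Derive c x) (f x)) (oscale (c x) (odv f x)).
Proof. intros c f x Hc Hf. genf f Hf. mkalg.
  change (Derive c x) with (Derive (fun y => c y) x). apply oct_eq; dcomp. Qed.

Lemma Derive_inner : forall f g x, odiff f x -> odiff g x ->
  Derive (fun u => oinner (f u) (g u)) x = oinner (odv f x) (g x) + oinner (f x) (odv g x).
Proof. intros f g x Hf Hg. genf f Hf. genf g Hg. mkalg. dcomp. Qed.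

Ltac kcases k := destruct k as [|[|[|[|[|[|[|[|k]]]]]]]].

Lemma odiff_cross : forall f g x, odiff f x -> odiff g x -> odiff (fun u => ocross (f u) (g u)) x.
Proof. intros f g x Hf Hg. genf f Hf. genf g Hg. intros k; kcases k; mkalg; auto_derive; solve_exd. Qed.
Lemma odiff_add : forall f g x, odiff f x -> odiff g x -> odiff (fun u => oadd (f u) (g u)) x.
Proof. intros f g x Hf Hg. genf f Hf. genf g Hg. intros k; kcases k; mkalg; auto_derive; solve_exd. Qed.
Lemma odiff_sub : forall f g x, odiff f x -> odiff g x -> odiff (fun u => osub (f u) (g u)) x.
Proof. intros f g x Hf Hg. genf f Hf. genf g Hg. intros k; kcases k; mkalg; auto_derive; solve_exd. Qed.
Lemma odiff_opp : forall f x, odiff f x -> odiff (fun u => oopp (f u)) x.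
Proof. intros f x Hf. genf f Hf. intros k; kcases k; mkalg; auto_derive; solve_exd. Qed.
Lemma odiff_scale : forall (c : R -> R) f x, ex_derive c x -> odiff f x -> odiff (fun u => oscale (c u) (f u)) x.
Proof. intros c f x Hc Hf. genf f Hf. intros k; kcases k; mkalg; auto_derive; solve_exd. Qed.
Lemma exd_inner : forall f g x, odiff f x -> odiff g x -> ex_derive (fun u => oinner (f u) (g u)) x.
Proof. intros f g x Hf Hg. genf f Hf. genf g Hg. mkalg; auto_derive; solve_exd. Qed.

Lemma odv_ext_loc : forall f g x, locally x (fun u => f u = g u) -> odv f x = odv g x.
Proof.
  intros f g x H. unfold odv. f_equal. extensionality k. apply Derive_ext_loc.
  revert H; apply filter_imp. intros u Hu. unfold comps; rewrite Hu; auto.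
Qed.

Lemma odiff_ext_loc : forall f g x, locally x (fun u => f u = g u) -> odiff f x -> odiff g x.
Proof.
  intros f g x H Hf k. apply (ex_derive_ext_loc (comps f k)); auto.
  revert H; apply filter_imp. intros u Hu. unfold comps; rewrite Hu; auto.
Qed.

Lemma odv_eq_loc : forall f x, locally x (fun u => is_imag (f u)) -> is_imag (odv f x).
Proof.
  intros f x H. unfold is_imag, ore, odv, of_comps. simpl.
  rewrite (Derive_ext_loc _ (fun _ => 0)). apply Derive_const.
  revert H; apply filter_imp. intros u Hu. unfold comps; simpl. exact Hu.
Qed.

Definition sm (F : R -> R -> oct) (t s : R) : Prop :=
  forall (k n : nat), ex_diff_n (fun t' s' => ocomp (F t' s') k) n t s.

Lemma ocomp_dS : forall F a b k, ocomp (dS F a b) k = Derive (fun z => ocomp (F a z) k) b.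
Proof. intros F a b k. kcases k; reflexivity. Qed.
Lemma ocomp_dT : forall F a b k, ocomp (dT F a b) k = Derive (fun z => ocomp (F z b) k) a.
Proof. intros F a b k. kcases k; reflexivity. Qed.

Lemma sm_dS : forall F t s, sm F t s -> sm (dS F) t s.
Proof.
  intros F t s H k n.
  replace (fun t' s' => ocomp (dS F t' s') k) with
    (fun u v => Derive (fun z => (fun t' s' => ocomp (F t' s') k) u z) v).
  - apply ex_diff_n_deriv_aux2. apply H.
  - extensionality u; extensionality v. rewrite ocomp_dS. reflexivity.
Qed.

Lemma sm_dT : forall F t s, sm F t s -> sm (dT F) t s.
Proof.
  intros F t s H k n.
  replace (fun t' s' => ocomp (dT F t' s') k) with
    (fun u v => Derive (fun z => (fun t' s' => ocomp (F t' s') k) z v) u).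
  - apply ex_diff_n_deriv_aux1. apply H.
  - extensionality u; extensionality v. rewrite ocomp_dT. reflexivity.
Qed.

Lemma sm_odiff_s : forall F t s, sm F t s -> odiff (F t) s.
Proof. intros F t s H k. destruct (H k 1%nat) as [_ [_ [Hs _]]]. exact Hs. Qed.
Lemma sm_odiff_t : forall F t s, sm F t s -> odiff (fun u => F u s) t.
Proof. intros F t s H k. destruct (H k 1%nat) as [_ [Ht _]]. exact Ht. Qed.

Lemma oct_ext : forall x y, (forall k, ocomp x k = ocomp y k) -> x = y.
Proof.
  intros x y H. dest x; dest y.
  pose proof (H 0%nat); pose proof (H 1%nat); pose proof (H 2%nat); pose proof (H 3%nat);
  pose proof (H 4%nat); pose proof (H 5%nat); pose proof (H 6%nat); pose proof (H 7%nat).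
  simpl in *. subst. reflexivity.
Qed.

Lemma schwarz_o : forall F t s, locally_2d (sm F) t s -> dT (dS F) t s = dS (dT F) t s.
Proof.
  intros F t s H. apply oct_ext. intros k. rewrite ocomp_dT, ocomp_dS.
  rewrite (Derive_ext (fun z => ocomp (dS F z s) k) (fun z => Derive (fun w => ocomp (F z w) k) s))
    by (intros; apply ocomp_dS).
  rewrite (Derive_ext (fun z => ocomp (dT F t z) k) (fun z => Derive (fun w => ocomp (F w z) k) t))
    by (intros; apply ocomp_dT).
  set (f := fun a b => ocomp (F a b) k).
  change (Derive (fun z => Derive (fun w => f z w) s) t = Derive (fun z => Derive (fun w => f w z) t) s).
  destruct H as [d Hd].
  assert (H2 : forall u v, Rabs (u - t) < d -> Rabs (v - s) < d -> ex_diff_n f 2 u v)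
    by (intros u v Hu Hv; apply (Hd u v Hu Hv)).
  apply Schwarz.
  - exists d. intros u v Hu Hv. destruct (H2 u v Hu Hv) as [_ [A [B [C D]]]].
    destruct C as [_ [_ [C1 _]]]. destruct D as [_ [D1 _]].
    repeat split; auto.
  - destruct (H2 t s) as [_ [_ [_ [_ D]]]]; try (rewrite Rminus_eq_0, Rabs_R0; apply cond_pos).
    destruct D as [_ [D1 [_ [D2 _]]]]. destruct D2 as [D2 _]. exact D2.
  - destruct (H2 t s) as [_ [_ [_ [C _]]]]; try (rewrite Rminus_eq_0, Rabs_R0; apply cond_pos).
    destruct C as [_ [_ [C1 [_ C2]]]]. destruct C2 as [C2 _]. exact C2.
Qed.

Lemma loc_rbar : forall (a b : Rbar) (t : R), Rbar_lt a t -> Rbar_lt t b ->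
  exists d : posreal, forall u, Rabs (u - t) < d -> Rbar_lt a u /\ Rbar_lt u b.
Proof.
  intros a b t Ha Hb.
  destruct (open_Rbar_gt a t Ha) as [d1 H1]. destruct (open_Rbar_lt b t Hb) as [d2 H2].
  exists (mkposreal _ (Rmin_stable_in_posreal d1 d2)). simpl. intros u Hu. split.
  - apply H1. unfold ball; simpl; unfold AbsRing_ball, abs, minus, plus, opp; simpl.
    apply Rlt_le_trans with (1 := Hu). apply Rmin_l.
  - apply H2. unfold ball; simpl; unfold AbsRing_ball, abs, minus, plus, opp; simpl.
    apply Rlt_le_trans with (1 := Hu). apply Rmin_r.
Qed.

Lemma rect_2d : forall ta tb sa sb t s, in_rect ta tb sa sb t s ->
  locally_2d (in_rect ta tb sa sb) t s.
Proof.
  intros ta tb sa sb t s [H1 [H2 [H3 H4]]].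
  destruct (loc_rbar ta tb t H1 H2) as [d1 D1]. destruct (loc_rbar sa sb s H3 H4) as [d2 D2].
  exists (mkposreal _ (Rmin_stable_in_posreal d1 d2)). simpl. intros u v Hu Hv.
  destruct (D1 u) as [A B]. apply Rlt_le_trans with (1 := Hu); apply Rmin_l.
  destruct (D2 v) as [C D]. apply Rlt_le_trans with (1 := Hv); apply Rmin_r.
  repeat split; auto.
Qed.

Lemma loc2d_imp : forall (P Q : R -> R -> Prop) t s, (forall u v, P u v -> Q u v) ->
  locally_2d P t s -> locally_2d Q t s.
Proof. intros P Q t s H [d Hd]. exists d. auto. Qed.

Lemma rect_s : forall ta tb sa sb t s, in_rect ta tb sa sb t s ->
  locally s (fun u => in_rect ta tb sa sb t u).
Proof. intros. apply locally_2d_1d_const_x. apply rect_2d; auto. Qed.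
Lemma rect_t : forall ta tb sa sb t s, in_rect ta tb sa sb t s ->
  locally t (fun u => in_rect ta tb sa sb u s).
Proof. intros. apply locally_2d_1d_const_y with (P := in_rect ta tb sa sb). apply rect_2d; auto. Qed.

Lemma rect_2d_2d : forall ta tb sa sb t s, in_rect ta tb sa sb t s ->
  locally_2d (fun u v => locally_2d (in_rect ta tb sa sb) u v) t s.
Proof.
  intros. apply (loc2d_imp (in_rect ta tb sa sb)); [|apply rect_2d; auto].
  intros; apply rect_2d; auto.
Qed.

Record Hyps (g : R -> R -> oct) (ta tb sa sb : Rbar) : Prop := {
  hsm : forall t s, in_rect ta tb sa sb t s -> smooth_at g t s;
  him : forall t s, in_rect ta tb sa sb t s -> is_imag (g t s);
  hfl : forall t s, in_rect ta tb sa sb t s -> dT g t s = ocross (dS g t s) (dS (dS g) t s);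
  hun : forall t s, in_rect ta tb sa sb t s -> onorm (dS g t s) = 1;
  hk1 : forall t s, in_rect ta tb sa sb t s -> 0 < k1 g t s;
  hk2 : forall t s, in_rect ta tb sa sb t s -> 0 < kappa2 g t s;
  hph3 : forall t s, in_rect ta tb sa sb t s -> phi3 g t s = RtoC 0 }.

Lemma exd_sqrt : forall h x, ex_derive h x -> 0 < h x -> ex_derive (fun u => sqrt (h u)) x.
Proof. intros h x H1 H2. auto_derive. split; auto. Qed.
Lemma exd_inv : forall h x, ex_derive h x -> h x <> 0 -> ex_derive (fun u => / h u) x.
Proof. intros h x H1 H2. auto_derive. split; auto. Qed.
Lemma Derive_sqrt' : forall h x, ex_derive h x -> 0 < h x ->
  Derive (fun u => sqrt (h u)) x = Derive h x / (2 * sqrt (h x)).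
Proof. intros h x H1 H2. apply is_derive_unique. auto_derive. split; auto.
  change (fun x0 => h x0) with h. field. apply Rgt_not_eq, sqrt_lt_R0; auto. Qed.
Lemma Derive_inv' : forall h x, ex_derive h x -> h x <> 0 ->
  Derive (fun u => / h u) x = - Derive h x / (h x) ^ 2.
Proof. intros h x H1 H2. apply is_derive_unique. auto_derive. split; auto.
  change (fun x0 => h x0) with h. field. auto. Qed.
Lemma exd_Q : forall A B K s, ex_derive A s -> ex_derive B s -> ex_derive K s -> K s <> 0 ->
  ex_derive (fun u => - ((A u + B u) / (2 * K u)) / K u ^ 2) s.
Proof. intros. auto_derive. repeat split; auto. Qed.
Lemma exd_poly3 : forall A B C s, ex_derive A s -> ex_derive B s -> ex_derive C s ->
  ex_derive (fun u => A u - B u ^ 2 - C u ^ 2) s.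
Proof. intros. auto_derive. repeat split; auto. Qed.
Lemma sqrt_pos_inv : forall x, 0 < sqrt x -> 0 < x.
Proof. intros x H. destruct (Rle_lt_dec x 0) as [h|h]; auto. rewrite sqrt_neg_0 in H; lra. Qed.

Lemma orth_deriv : forall f g s c, odiff f s -> odiff g s ->
  locally s (fun u => oinner (f u) (g u) = c) ->
  oinner (odv f s) (g s) + oinner (f s) (odv g s) = 0.
Proof.
  intros f g s c Hf Hg Hl. rewrite <- Derive_inner; auto.
  rewrite (Derive_ext_loc _ (fun _ => c)); auto. apply Derive_const.
Qed.


Ltac smt H := repeat (apply sm_dS || apply sm_dT); apply (hsm _ _ _ _ _ H); auto.

Lemma imag_dS' : forall (F : R -> R -> oct) ta tb sa sb,
  (forall t s, in_rect ta tb sa sb t s -> is_imag (F t s)) ->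
  forall t s, in_rect ta tb sa sb t s -> is_imag (dS F t s).
Proof.
  intros F ta tb sa sb HF t s Hr. exact (odv_eq_loc (F t) s
    (filter_imp _ _ (fun u Hu => HF t u Hu) (rect_s _ _ _ _ _ _ Hr))).
Qed.
Lemma imag_dT' : forall (F : R -> R -> oct) ta tb sa sb,
  (forall t s, in_rect ta tb sa sb t s -> is_imag (F t s)) ->
  forall t s, in_rect ta tb sa sb t s -> is_imag (dT F t s).
Proof.
  intros F ta tb sa sb HF t s Hr. exact (odv_eq_loc (fun u => F u s) t
    (filter_imp _ _ (fun u Hu => HF u s Hu) (rect_t _ _ _ _ _ _ Hr))).
Qed.




Lemma imag_g : forall g ta tb sa sb, Hyps g ta tb sa sb -> forall n t s, in_rect ta tb sa sb t s ->
  is_imag (Nat.iter n dS g t s).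
Proof.
  intros g ta tb sa sb H n. induction n; intros t s Hr.
  - apply (him _ _ _ _ _ H); auto.
  - simpl. apply imag_dS' with (ta := ta) (tb := tb) (sa := sa) (sb := sb); auto.
Qed.

Lemma imag_I1 : forall g ta tb sa sb, Hyps g ta tb sa sb -> forall t s, in_rect ta tb sa sb t s ->
  is_imag (I1 g t s).
Proof. intros. unfold I1. apply imag_scale. apply (imag_g _ _ _ _ _ H 2); auto. Qed.

Lemma imag_v : forall g ta tb sa sb, Hyps g ta tb sa sb -> forall t s, in_rect ta tb sa sb t s ->
  is_imag (dS (I1 g) t s).
Proof. intros. apply imag_dS' with (ta := ta) (tb := tb) (sa := sa) (sb := sb); auto.
  intros; eapply imag_I1; eauto. Qed.

Lemma I4_unit : forall g ta tb sa sb, Hyps g ta tb sa sb -> forall t s, in_rect ta tb sa sb t s ->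
  oinner (I4 g t s) (I4 g t s) = 1.
Proof. intros. apply sqrt_eq1. apply oinner_self_ge0. apply (hun _ _ _ _ _ H); auto. Qed.

Lemma k1_def : forall g t s, k1 g t s = sqrt (oinner (dS (dS g) t s) (dS (dS g) t s)).
Proof. reflexivity. Qed.

Lemma k1_in_pos : forall g ta tb sa sb, Hyps g ta tb sa sb -> forall t s, in_rect ta tb sa sb t s ->
  0 < oinner (dS (dS g) t s) (dS (dS g) t s).
Proof. intros. apply sqrt_pos_inv. rewrite <- k1_def. apply (hk1 _ _ _ _ _ H); auto. Qed.

Lemma k1_exd_s : forall g ta tb sa sb, Hyps g ta tb sa sb -> forall t s, in_rect ta tb sa sb t s ->
  ex_derive (fun u => k1 g t u) s.
Proof.
  intros. apply (exd_sqrt (fun u => oinner (dS (dS g) t u) (dS (dS g) t u))).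
  - apply exd_inner; apply sm_odiff_s; smt H.
  - eapply k1_in_pos; eauto.
Qed.

Lemma k1_exd_t : forall g ta tb sa sb, Hyps g ta tb sa sb -> forall t s, in_rect ta tb sa sb t s ->
  ex_derive (fun u => k1 g u s) t.
Proof.
  intros. apply (exd_sqrt (fun u => oinner (dS (dS g) u s) (dS (dS g) u s))).
  - apply (exd_inner (fun u => dS (dS g) u s) (fun u => dS (dS g) u s)); apply sm_odiff_t; smt H.
  - eapply k1_in_pos; eauto.
Qed.

Definition Qf g t s := - ((oinner (dS (dS (dS g)) t s) (dS (dS g) t s) +
   oinner (dS (dS g) t s) (dS (dS (dS g)) t s)) / (2 * k1 g t s)) / (k1 g t s) ^ 2.

Lemma Dinvk1 : forall g ta tb sa sb, Hyps g ta tb sa sb -> forall t s, in_rect ta tb sa sb t s ->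
  Derive (fun u => / k1 g t u) s = Qf g t s.
Proof.
  intros. pose proof (hk1 _ _ _ _ _ H t s H0) as Hk.
  rewrite (Derive_inv' (fun u => k1 g t u)); [| eapply k1_exd_s; eauto | lra].
  unfold Qf. f_equal. f_equal.
  rewrite (Derive_sqrt' (fun u => oinner (dS (dS g) t u) (dS (dS g) t u))).
  - rewrite Derive_inner by (apply sm_odiff_s; smt H). reflexivity.
  - apply exd_inner; apply sm_odiff_s; smt H.
  - eapply k1_in_pos; eauto.
Qed.

Lemma Qf_exd : forall g ta tb sa sb, Hyps g ta tb sa sb -> forall t s, in_rect ta tb sa sb t s ->
  ex_derive (fun u => Qf g t u) s.
Proof.
  intros. unfold Qf.
  apply (exd_Q (fun u => oinner (dS (dS (dS g)) t u) (dS (dS g) t u))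
               (fun u => oinner (dS (dS g) t u) (dS (dS (dS g)) t u)) (fun u => k1 g t u)).
  - apply exd_inner; apply sm_odiff_s; smt H.
  - apply exd_inner; apply sm_odiff_s; smt H.
  - eapply k1_exd_s; eauto.
  - pose proof (hk1 _ _ _ _ _ H t s H0). lra.
Qed.

Lemma I1_odiff : forall g ta tb sa sb, Hyps g ta tb sa sb -> forall t s, in_rect ta tb sa sb t s ->
  odiff (I1 g t) s.
Proof.
  intros. unfold I1. apply (odiff_scale (fun u => / k1 g t u) (fun u => dS (I4 g) t u)).
  - apply (exd_inv (fun u => k1 g t u)). eapply k1_exd_s; eauto.
    pose proof (hk1 _ _ _ _ _ H t s H0). lra.
  - apply sm_odiff_s; unfold I4; smt H.
Qed.

Definition vform g t s := oadd (oscale (Qf g t s) (dS (dS g) t s)) (oscale (/ k1 g t s) (dS (dS (dS g)) t s)).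

Lemma v_form : forall g ta tb sa sb, Hyps g ta tb sa sb -> forall t s, in_rect ta tb sa sb t s ->
  dS (I1 g) t s = vform g t s.
Proof.
  intros. change (dS (I1 g) t s) with (odv (fun u => oscale (/ k1 g t u) (dS (dS g) t u)) s).
  rewrite odv_scale.
  - unfold vform. erewrite Dinvk1; eauto.
  - apply (exd_inv (fun u => k1 g t u)). eapply k1_exd_s; eauto.
    pose proof (hk1 _ _ _ _ _ H t s H0). lra.
  - apply sm_odiff_s; smt H.
Qed.

Lemma v_odiff : forall g ta tb sa sb, Hyps g ta tb sa sb -> forall t s, in_rect ta tb sa sb t s ->
  odiff (dS (I1 g) t) s.
Proof.
  intros. apply (odiff_ext_loc (vform g t)).
  - eapply filter_imp; [|apply (rect_s _ _ _ _ _ _ H0)]. intros u Hu. simpl.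
    symmetry. eapply v_form; eauto.
  - unfold vform. apply odiff_add.
    + apply (odiff_scale (fun u => Qf g t u) (fun u => dS (dS g) t u)).
      eapply Qf_exd; eauto. apply sm_odiff_s; smt H.
    + apply (odiff_scale (fun u => / k1 g t u) (fun u => dS (dS (dS g)) t u)).
      apply (exd_inv (fun u => k1 g t u)). eapply k1_exd_s; eauto.
      pose proof (hk1 _ _ _ _ _ H t s H0). lra.
      apply sm_odiff_s; smt H.
Qed.

Lemma I4_odiff : forall g ta tb sa sb, Hyps g ta tb sa sb -> forall t s, in_rect ta tb sa sb t s ->
  odiff (I4 g t) s.
Proof. intros. apply sm_odiff_s; unfold I4; smt H. Qed.

Lemma I5_odiff : forall g ta tb sa sb, Hyps g ta tb sa sb -> forall t s, in_rect ta tb sa sb t s ->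
  odiff (I5 g t) s.
Proof. intros. apply (odiff_cross (I1 g t) (I4 g t)); [eapply I1_odiff | eapply I4_odiff]; eauto. Qed.

Definition kin g t s := oinner (dS (I1 g) t s) (dS (I1 g) t s)
  - oinner (dS (I1 g) t s) (I4 g t s) ^ 2 - oinner (dS (I1 g) t s) (I5 g t s) ^ 2.

Lemma kappa2_eq : forall g t s, kappa2 g t s = sqrt (kin g t s).
Proof. intros. unfold kappa2, kin, onorm. rewrite pow2_sqrt; auto. apply oinner_self_ge0. Qed.

Lemma kin_pos : forall g ta tb sa sb, Hyps g ta tb sa sb -> forall t s, in_rect ta tb sa sb t s ->
  0 < kin g t s.
Proof. intros. apply sqrt_pos_inv. rewrite <- kappa2_eq. apply (hk2 _ _ _ _ _ H); auto. Qed.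

Lemma kappa2_exd : forall g ta tb sa sb, Hyps g ta tb sa sb -> forall t s, in_rect ta tb sa sb t s ->
  ex_derive (fun u => kappa2 g t u) s.
Proof.
  intros. apply (ex_derive_ext (fun u => sqrt (kin g t u))).
  { intros; symmetry; apply kappa2_eq. }
  apply (exd_sqrt (fun u => kin g t u)); [| eapply kin_pos; eauto].
  unfold kin.
  apply (exd_poly3 (fun u => oinner (dS (I1 g) t u) (dS (I1 g) t u))
     (fun u => oinner (dS (I1 g) t u) (I4 g t u)) (fun u => oinner (dS (I1 g) t u) (I5 g t u))).
  - apply exd_inner; eapply v_odiff; eauto.
  - apply exd_inner; [eapply v_odiff | eapply I4_odiff]; eauto.
  - apply exd_inner; [eapply v_odiff | eapply I5_odiff]; eauto.
Qed.

Lemma I2_odiff : forall g ta tb sa sb, Hyps g ta tb sa sb -> forall t s, in_rect ta tb sa sb t s ->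
  odiff (I2 g t) s.
Proof.
  intros. pose proof (v_odiff _ _ _ _ _ H t s H0) as Hv.
  pose proof (I4_odiff _ _ _ _ _ H t s H0) as H4.
  pose proof (I5_odiff _ _ _ _ _ H t s H0) as H5.
  unfold I2.
  apply (odiff_scale (fun u => / kappa2 g t u)).
  - apply (exd_inv (fun u => kappa2 g t u)). eapply kappa2_exd; eauto.
    pose proof (hk2 _ _ _ _ _ H t s H0). lra.
  - apply (odiff_sub (fun u => osub (dS (I1 g) t u) (oscale (oinner (dS (I1 g) t u) (I4 g t u)) (I4 g t u)))
                     (fun u => oscale (oinner (dS (I1 g) t u) (I5 g t u)) (I5 g t u))).
    + apply (odiff_sub (dS (I1 g) t)). auto.
      apply (odiff_scale (fun u => oinner (dS (I1 g) t u) (I4 g t u)) (I4 g t)); auto.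
      apply exd_inner; auto.
    + apply (odiff_scale (fun u => oinner (dS (I1 g) t u) (I5 g t u)) (I5 g t)); auto.
      apply exd_inner; auto.
Qed.

Lemma I3_odiff : forall g ta tb sa sb, Hyps g ta tb sa sb -> forall t s, in_rect ta tb sa sb t s ->
  odiff (I3 g t) s.
Proof. intros. apply (odiff_cross (I1 g t) (I2 g t)); [eapply I1_odiff | eapply I2_odiff]; eauto. Qed.
Lemma I6_odiff : forall g ta tb sa sb, Hyps g ta tb sa sb -> forall t s, in_rect ta tb sa sb t s ->
  odiff (I6 g t) s.
Proof. intros. apply (odiff_cross (I2 g t) (I4 g t)); [eapply I2_odiff | eapply I4_odiff]; eauto. Qed.
Lemma I7_odiff : forall g ta tb sa sb, Hyps g ta tb sa sb -> forall t s, in_rect ta tb sa sb t s ->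
  odiff (I7 g t) s.
Proof. intros. apply (odiff_cross (I3 g t) (I4 g t)); [eapply I3_odiff | eapply I4_odiff]; eauto. Qed.

Lemma I1_unit : forall g ta tb sa sb, Hyps g ta tb sa sb -> forall t s, in_rect ta tb sa sb t s ->
  oinner (I1 g t s) (I1 g t s) = 1.
Proof.
  intros. unfold I1. rewrite oinner_scalel, oinner_scaler.
  pose proof (k1_in_pos _ _ _ _ _ H t s H0) as Hp.
  change (dS (I4 g) t s) with (dS (dS g) t s).
  rewrite k1_def. set (a := oinner (dS (dS g) t s) (dS (dS g) t s)) in *.
  assert (sqrt a <> 0) by (apply Rgt_not_eq, sqrt_lt_R0; auto).
  rewrite <- (sqrt_sqrt a) at 3 by lra. field. auto.
Qed.

Lemma G2_I4 : forall g ta tb sa sb, Hyps g ta tb sa sb -> forall t s, in_rect ta tb sa sb t s ->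
  oinner (dS (dS g) t s) (I4 g t s) = 0.
Proof.
  intros. pose proof (I4_odiff _ _ _ _ _ H t s H0) as H4.
  pose proof (orth_deriv (I4 g t) (I4 g t) s 1 H4 H4) as Ho.
  change (odv (I4 g t) s) with (dS (dS g) t s) in Ho.
  rewrite (oinner_sym (I4 g t s)) in Ho.
  assert (oinner (dS (dS g) t s) (I4 g t s) + oinner (dS (dS g) t s) (I4 g t s) = 0).
  { apply Ho. eapply filter_imp; [|apply (rect_s _ _ _ _ _ _ H0)]. intros u Hu.
    eapply I4_unit; eauto. }
  lra.
Qed.

Lemma I1_I4 : forall g ta tb sa sb, Hyps g ta tb sa sb -> forall t s, in_rect ta tb sa sb t s ->
  oinner (I1 g t s) (I4 g t s) = 0.
Proof. intros. unfold I1. rewrite oinner_scalel. change (dS (I4 g) t s) with (dS (dS g) t s).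
  erewrite G2_I4; eauto. ring. Qed.

Lemma v_I1 : forall g ta tb sa sb, Hyps g ta tb sa sb -> forall t s, in_rect ta tb sa sb t s ->
  oinner (dS (I1 g) t s) (I1 g t s) = 0.
Proof.
  intros. pose proof (I1_odiff _ _ _ _ _ H t s H0) as H1.
  pose proof (orth_deriv (I1 g t) (I1 g t) s 1 H1 H1) as Ho.
  change (odv (I1 g t) s) with (dS (I1 g) t s) in Ho.
  rewrite (oinner_sym (I1 g t s)) in Ho.
  assert (oinner (dS (I1 g) t s) (I1 g t s) + oinner (dS (I1 g) t s) (I1 g t s) = 0).
  { apply Ho. eapply filter_imp; [|apply (rect_s _ _ _ _ _ _ H0)]. intros u Hu.
    eapply I1_unit; eauto. }
  lra.
Qed.

Lemma FR : forall g ta tb sa sb, Hyps g ta tb sa sb -> forall t s, in_rect ta tb sa sb t s ->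
  frame (I1 g t s) (I2 g t s) (I3 g t s) (I4 g t s) (I5 g t s) (I6 g t s) (I7 g t s).
Proof.
  intros. apply frame_alg with (v := dS (I1 g) t s) (kap := kappa2 g t s).
  - eapply imag_I1; eauto.
  - apply (imag_g _ _ _ _ _ H 1); auto.
  - eapply imag_v; eauto.
  - eapply I4_unit; eauto.
  - eapply I1_unit; eauto.
  - eapply I1_I4; eauto.
  - eapply v_I1; eauto.
  - apply (hk2 _ _ _ _ _ H); auto.
  - rewrite kappa2_eq, pow2_sqrt. reflexivity. pose proof (kin_pos _ _ _ _ _ H t s H0). lra.
  - reflexivity.
  - reflexivity.
  - reflexivity.
  - reflexivity.
  - reflexivity.
Qed.

Lemma loc_s : forall ta tb sa sb t s (P : R -> Prop), in_rect ta tb sa sb t s ->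
  (forall u, in_rect ta tb sa sb t u -> P u) -> locally s P.
Proof. intros. eapply filter_imp; [|apply (rect_s _ _ _ _ _ _ H)]. auto. Qed.
Lemma loc_t : forall ta tb sa sb t s (P : R -> Prop), in_rect ta tb sa sb t s ->
  (forall u, in_rect ta tb sa sb u s -> P u) -> locally t P.
Proof. intros. eapply filter_imp; [|apply (rect_t _ _ _ _ _ _ H)]. auto. Qed.

Lemma G2_eq : forall g ta tb sa sb, Hyps g ta tb sa sb -> forall t s, in_rect ta tb sa sb t s ->
  dS (dS g) t s = oscale (k1 g t s) (I1 g t s).
Proof. intros. unfold I1. rewrite oscale_inv. reflexivity.
  pose proof (hk1 _ _ _ _ _ H t s H0). lra. Qed.

Lemma od : forall (F1 F2 : R -> R -> oct) t s c, odiff (F1 t) s -> odiff (F2 t) s ->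
  locally s (fun u => oinner (F1 t u) (F2 t u) = c) ->
  oinner (dS F1 t s) (F2 t s) + oinner (F1 t s) (dS F2 t s) = 0.
Proof. intros. apply (orth_deriv (F1 t) (F2 t) s c); auto. Qed.

Lemma v_I4 : forall g ta tb sa sb, Hyps g ta tb sa sb -> forall t s, in_rect ta tb sa sb t s ->
  oinner (dS (I1 g) t s) (I4 g t s) = - k1 g t s.
Proof.
  intros. pose proof (od (I1 g) (I4 g) t s 0) as Ho.
  change (dS (I4 g) t s) with (dS (dS g) t s) in Ho.
  rewrite (G2_eq _ _ _ _ _ H t s H0), oinner_scaler, (I1_unit _ _ _ _ _ H t s H0) in Ho.
  assert (oinner (dS (I1 g) t s) (I4 g t s) + k1 g t s * 1 = 0); [|lra].
  apply Ho; [eapply I1_odiff | eapply I4_odiff | apply (loc_s ta tb sa sb t s)]; eauto.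
  intros; eapply I1_I4; eauto.
Qed.

Lemma v_dec : forall g ta tb sa sb, Hyps g ta tb sa sb -> forall t s, in_rect ta tb sa sb t s ->
  dS (I1 g) t s = oadd (oscale (- k1 g t s) (I4 g t s))
    (oadd (oscale (rho1 g t s) (I5 g t s)) (oscale (kappa2 g t s) (I2 g t s))).
Proof.
  intros. rewrite <- (v_I4 _ _ _ _ _ H t s H0). unfold rho1, I2.
  apply decomp_v. pose proof (hk2 _ _ _ _ _ H t s H0). lra.
Qed.

Lemma G3_eq : forall g ta tb sa sb, Hyps g ta tb sa sb -> forall t s, in_rect ta tb sa sb t s ->
  dS (dS (dS g)) t s = oadd (oscale (Derive (fun u => k1 g t u) s) (I1 g t s))
                            (oscale (k1 g t s) (dS (I1 g) t s)).
Proof.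
  intros. change (dS (dS (dS g)) t s) with (odv (fun u => dS (dS g) t u) s).
  rewrite (odv_ext_loc _ (fun u => oscale (k1 g t u) (I1 g t u))).
  - rewrite odv_scale. reflexivity. eapply k1_exd_s; eauto. eapply I1_odiff; eauto.
  - apply (loc_s ta tb sa sb t s); auto. intros; eapply G2_eq; eauto.
Qed.

Lemma dI5_eq : forall g ta tb sa sb, Hyps g ta tb sa sb -> forall t s, in_rect ta tb sa sb t s ->
  dS (I5 g) t s = oadd (ocross (dS (I1 g) t s) (I4 g t s)) (ocross (I1 g t s) (dS (dS g) t s)).
Proof.
  intros. change (dS (I5 g) t s) with (odv (fun u => ocross (I1 g t u) (I4 g t u)) s).
  rewrite odv_cross. reflexivity. eapply I1_odiff; eauto. eapply I4_odiff; eauto.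
Qed.

Lemma dI3_eq : forall g ta tb sa sb, Hyps g ta tb sa sb -> forall t s, in_rect ta tb sa sb t s ->
  dS (I3 g) t s = oadd (ocross (dS (I1 g) t s) (I2 g t s)) (ocross (I1 g t s) (dS (I2 g) t s)).
Proof.
  intros. change (dS (I3 g) t s) with (odv (fun u => ocross (I1 g t u) (I2 g t u)) s).
  rewrite odv_cross. reflexivity. eapply I1_odiff; eauto. eapply I2_odiff; eauto.
Qed.

Lemma dSopp_eq : forall g ta tb sa sb, Hyps g ta tb sa sb -> forall t s, in_rect ta tb sa sb t s ->
  dS (fun t s => oopp (I5 g t s)) t s = oopp (dS (I5 g) t s).
Proof.
  intros. change (dS (fun t s => oopp (I5 g t s)) t s) with (odv (fun u => oopp (I5 g t u)) s).
  rewrite odv_opp. reflexivity. eapply I5_odiff; eauto.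
Qed.

Lemma sm2d : forall g ta tb sa sb, Hyps g ta tb sa sb -> forall n t s, in_rect ta tb sa sb t s ->
  locally_2d (sm (Nat.iter n dS g)) t s.
Proof.
  intros. apply (loc2d_imp (in_rect ta tb sa sb)); [|apply rect_2d; auto].
  intros u v Hr. induction n; simpl. apply (hsm _ _ _ _ _ H); auto. apply sm_dS; auto.
Qed.

Lemma dTI4_eq : forall g ta tb sa sb, Hyps g ta tb sa sb -> forall t s, in_rect ta tb sa sb t s ->
  dT (dS g) t s = oadd (ocross (dS (dS g) t s) (dS (dS g) t s)) (ocross (dS g t s) (dS (dS (dS g)) t s)).
Proof.
  intros. rewrite schwarz_o by (apply (sm2d _ _ _ _ _ H 0); auto).
  change (dS (dT g) t s) with (odv (fun u => dT g t u) s).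
  rewrite (odv_ext_loc _ (fun u => ocross (dS g t u) (dS (dS g) t u))).
  - rewrite odv_cross. reflexivity.
    apply sm_odiff_s; smt H. apply sm_odiff_s; smt H.
  - apply (loc_s ta tb sa sb t s); auto. intros; apply (hfl _ _ _ _ _ H); auto.
Qed.

Lemma dTG2_eq : forall g ta tb sa sb, Hyps g ta tb sa sb -> forall t s, in_rect ta tb sa sb t s ->
  dT (dS (dS g)) t s =
  oadd (oadd (ocross (dS (dS (dS g)) t s) (dS (dS g) t s)) (ocross (dS (dS g) t s) (dS (dS (dS g)) t s)))
       (oadd (ocross (dS (dS g) t s) (dS (dS (dS g)) t s)) (ocross (dS g t s) (dS (dS (dS (dS g))) t s))).
Proof.
  intros. rewrite schwarz_o by (apply (sm2d _ _ _ _ _ H 1); auto).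
  change (dS (dT (dS g)) t s) with (odv (fun u => dT (dS g) t u) s).
  rewrite (odv_ext_loc _ (fun u => oadd (ocross (dS (dS g) t u) (dS (dS g) t u))
                                        (ocross (dS g t u) (dS (dS (dS g)) t u)))).
  - assert (O1 : odiff (fun u => dS g t u) s) by (apply sm_odiff_s; smt H).
    assert (O2 : odiff (fun u => dS (dS g) t u) s) by (apply sm_odiff_s; smt H).
    assert (O3 : odiff (fun u => dS (dS (dS g)) t u) s) by (apply sm_odiff_s; smt H).
    rewrite odv_add by (apply odiff_cross; auto).
    rewrite !odv_cross by auto. reflexivity.
  - apply (loc_s ta tb sa sb t s); auto. intros; eapply dTI4_eq; eauto.
Qed.

Lemma dTT_eq : forall g ta tb sa sb, Hyps g ta tb sa sb -> forall t s, in_rect ta tb sa sb t s ->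
  dT (dT g) t s = oadd (ocross (dT (dS g) t s) (dS (dS g) t s)) (ocross (dS g t s) (dT (dS (dS g)) t s)).
Proof.
  intros. change (dT (dT g) t s) with (odv (fun u => dT g u s) t).
  rewrite (odv_ext_loc _ (fun u => ocross (dS g u s) (dS (dS g) u s))).
  - rewrite odv_cross. reflexivity.
    apply sm_odiff_t; smt H. apply sm_odiff_t; smt H.
  - apply (loc_t ta tb sa sb t s); auto. intros; apply (hfl _ _ _ _ _ H); auto.
Qed.

Lemma I5_dT : forall g ta tb sa sb, Hyps g ta tb sa sb -> forall t s, in_rect ta tb sa sb t s ->
  oopp (I5 g t s) = oscale (/ k1 g t s) (dT g t s).
Proof.
  intros. rewrite (hfl _ _ _ _ _ H t s H0), (G2_eq _ _ _ _ _ H t s H0), cross_scaler.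
  change (dS g t s) with (I4 g t s). rewrite (c41 _ _ _ _ _ _ _ (FR _ _ _ _ _ H t s H0)).
  rewrite oscale_scale, Rinv_l, oscale_1. reflexivity.
  pose proof (hk1 _ _ _ _ _ H t s H0). lra.
Qed.

Lemma D_eq : forall g ta tb sa sb, Hyps g ta tb sa sb -> forall t s, in_rect ta tb sa sb t s ->
  dT (fun t s => oopp (I5 g t s)) t s =
  oadd (oscale (Derive (fun u => / k1 g u s) t) (dT g t s)) (oscale (/ k1 g t s) (dT (dT g) t s)).
Proof.
  intros. change (dT (fun t s => oopp (I5 g t s)) t s) with (odv (fun u => oopp (I5 g u s)) t).
  rewrite (odv_ext_loc _ (fun u => oscale (/ k1 g u s) (dT g u s))).
  - rewrite odv_scale. reflexivity.
    apply (exd_inv (fun u => k1 g u s)). eapply k1_exd_t; eauto.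
    pose proof (hk1 _ _ _ _ _ H t s H0). lra.
    apply sm_odiff_t; smt H.
  - apply (loc_t ta tb sa sb t s); auto. intros; eapply I5_dT; eauto.
Qed.

Ltac frame_intro fr :=
  let h := fresh in pose proof fr as h;
  destruct h as [Im1 Im2 Im3 Im4 Im5 Im6 Im7 N11 N22 N33 N44 N55 N66 N77 N12 N13 N14 N15 N16 N17
    N23 N24 N25 N26 N27 N34 N35 N36 N37 N45 N46 N47 N56 N57 N67 C14 C12 C24 C34 C41 C42 C43
    C45 C54 C15 C51 C61 P526];
  pose proof (eq_trans (oinner_sym _ _) N12) as N21;
  pose proof (eq_trans (oinner_sym _ _) N13) as N31;
  pose proof (eq_trans (oinner_sym _ _) N14) as N41;
  pose proof (eq_trans (oinner_sym _ _) N15) as N51;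
  pose proof (eq_trans (oinner_sym _ _) N16) as N61;
  pose proof (eq_trans (oinner_sym _ _) N17) as N71;
  pose proof (eq_trans (oinner_sym _ _) N23) as N32;
  pose proof (eq_trans (oinner_sym _ _) N24) as N42;
  pose proof (eq_trans (oinner_sym _ _) N25) as N52;
  pose proof (eq_trans (oinner_sym _ _) N26) as N62;
  pose proof (eq_trans (oinner_sym _ _) N27) as N72;
  pose proof (eq_trans (oinner_sym _ _) N34) as N43;
  pose proof (eq_trans (oinner_sym _ _) N35) as N53;
  pose proof (eq_trans (oinner_sym _ _) N36) as N63;
  pose proof (eq_trans (oinner_sym _ _) N37) as N73;
  pose proof (eq_trans (oinner_sym _ _) N45) as N54;
  pose proof (eq_trans (oinner_sym _ _) N46) as N64;
  pose proof (eq_trans (oinner_sym _ _) N47) as N74;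
  pose proof (eq_trans (oinner_sym _ _) N56) as N65;
  pose proof (eq_trans (oinner_sym _ _) N57) as N75;
  pose proof (eq_trans (oinner_sym _ _) N67) as N76;
  pose proof (eq_trans (cross_anti _ _) (f_equal oopp C12)) as C21.

Ltac ftab := repeat match goal with H : ocross ?a ?b = _ |- context [ocross ?a ?b] => rewrite H end.
Ltac xp := repeat progress (rewrite ?cross_addl, ?cross_addr, ?cross_subl, ?cross_subr,
  ?cross_scalel, ?cross_scaler, ?cross_oppl, ?cross_oppr, ?cross_self; ftab).
Ltac ip := repeat progress (rewrite ?oinner_addl, ?oinner_addr, ?oinner_subl, ?oinner_subr, ?oinner_scalel,
  ?oinner_scaler, ?oinner_oppl, ?oinner_oppr).
Ltac nt := repeat match goal with H : oinner ?a ?b = ?c |- context [oinner ?a ?b] =>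
  match c with context [oinner _ _] => fail 1 | _ => rewrite H end end.

Definition orthY g ta tb sa sb (Y : R -> R -> oct) : Prop :=
  forall t s, in_rect ta tb sa sb t s ->
    oinner (I1 g t s) (Y t s) = 0 /\ oinner (I2 g t s) (Y t s) = 0 /\
    oinner (I4 g t s) (Y t s) = 0 /\ oinner (I5 g t s) (Y t s) = 0 /\
    oinner (I6 g t s) (Y t s) = 0.

Lemma orthY_I3 : forall g ta tb sa sb, Hyps g ta tb sa sb -> orthY g ta tb sa sb (I3 g).
Proof. intros g ta tb sa sb H t s Hr. frame_intro (FR _ _ _ _ _ H t s Hr). repeat split; auto. Qed.
Lemma orthY_I7 : forall g ta tb sa sb, Hyps g ta tb sa sb -> orthY g ta tb sa sb (I7 g).
Proof. intros g ta tb sa sb H t s Hr. frame_intro (FR _ _ _ _ _ H t s Hr). repeat split; auto. Qed.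

Lemma v_Y : forall g ta tb sa sb Y, Hyps g ta tb sa sb -> orthY g ta tb sa sb Y ->
  forall t s, in_rect ta tb sa sb t s -> oinner (dS (I1 g) t s) (Y t s) = 0.
Proof.
  intros g ta tb sa sb Y H HY t s Hr. destruct (HY t s Hr) as [Y1 [Y2 [Y4 [Y5 Y6]]]].
  rewrite (v_dec _ _ _ _ _ H t s Hr). ip. rewrite Y2, Y4, Y5. ring.
Qed.

Lemma G3_Y : forall g ta tb sa sb Y, Hyps g ta tb sa sb -> orthY g ta tb sa sb Y ->
  forall t s, in_rect ta tb sa sb t s -> oinner (dS (dS (dS g)) t s) (Y t s) = 0.
Proof.
  intros g ta tb sa sb Y H HY t s Hr. pose proof (HY t s Hr) as [Y1 _].
  rewrite (G3_eq _ _ _ _ _ H t s Hr). ip. rewrite Y1. rewrite (v_Y _ _ _ _ _ Y H HY t s Hr). ring.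
Qed.

Lemma dI5_Y : forall g ta tb sa sb Y, Hyps g ta tb sa sb -> orthY g ta tb sa sb Y ->
  forall t s, in_rect ta tb sa sb t s -> oinner (dS (I5 g) t s) (Y t s) = 0.
Proof.
  intros g ta tb sa sb Y H HY t s Hr. destruct (HY t s Hr) as [Y1 [Y2 [Y4 [Y5 Y6]]]].
  frame_intro (FR _ _ _ _ _ H t s Hr).
  rewrite (dI5_eq _ _ _ _ _ H t s Hr), (v_dec _ _ _ _ _ H t s Hr), (G2_eq _ _ _ _ _ H t s Hr).
  xp. ip. nt. ring.
Qed.

Lemma G4_Y : forall g ta tb sa sb Y, Hyps g ta tb sa sb -> orthY g ta tb sa sb Y ->
  (forall t s, in_rect ta tb sa sb t s -> odiff (Y t) s) ->
  forall t s, in_rect ta tb sa sb t s ->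
  oinner (dS (dS (dS (dS g))) t s) (Y t s) = k1 g t s * kappa2 g t s * oinner (dS (I2 g) t s) (Y t s).
Proof.
  intros g ta tb sa sb Y H HY HYd t s Hr.
  pose proof (HY t s Hr) as [Y1 [Y2 [Y4 [Y5 Y6]]]].
  assert (E1 := od (dS (dS (dS g))) Y t s 0).
  assert (E2 := od (I1 g) Y t s 0).
  assert (E3 := od (I4 g) Y t s 0).
  assert (E4 := od (I5 g) Y t s 0).
  assert (E5 := od (I2 g) Y t s 0).
  rewrite (v_Y _ _ _ _ _ Y H HY t s Hr) in E2.
  change (dS (I4 g) t s) with (dS (dS g) t s) in E3.
  rewrite (G2_eq _ _ _ _ _ H t s Hr), oinner_scalel, Y1 in E3.
  rewrite (dI5_Y _ _ _ _ _ Y H HY t s Hr) in E4.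
  assert (A1 : oinner (I1 g t s) (dS Y t s) = 0).
  { assert (0 + oinner (I1 g t s) (dS Y t s) = 0); [|lra].
    apply E2. eapply I1_odiff; eauto. auto. apply (loc_s ta tb sa sb t s); auto.
    intros u Hu; apply (HY t u Hu). }
  assert (A4 : oinner (I4 g t s) (dS Y t s) = 0).
  { assert (k1 g t s * 0 + oinner (I4 g t s) (dS Y t s) = 0); [|lra].
    apply E3. eapply I4_odiff; eauto. auto. apply (loc_s ta tb sa sb t s); auto.
    intros u Hu; apply (HY t u Hu). }
  assert (A5 : oinner (I5 g t s) (dS Y t s) = 0).
  { assert (0 + oinner (I5 g t s) (dS Y t s) = 0); [|lra].
    apply E4. eapply I5_odiff; eauto. auto. apply (loc_s ta tb sa sb t s); auto.
    intros u Hu; apply (HY t u Hu). }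
  assert (A2 : oinner (I2 g t s) (dS Y t s) = - oinner (dS (I2 g) t s) (Y t s)).
  { assert (oinner (dS (I2 g) t s) (Y t s) + oinner (I2 g t s) (dS Y t s) = 0); [|lra].
    apply E5. eapply I2_odiff; eauto. auto. apply (loc_s ta tb sa sb t s); auto.
    intros u Hu; apply (HY t u Hu). }
  assert (E1' : oinner (dS (dS (dS (dS g))) t s) (Y t s) +
     (Derive (fun u => k1 g t u) s * oinner (I1 g t s) (dS Y t s) +
      k1 g t s * (- k1 g t s * oinner (I4 g t s) (dS Y t s) +
        (rho1 g t s * oinner (I5 g t s) (dS Y t s) +
         kappa2 g t s * oinner (I2 g t s) (dS Y t s)))) = 0).
  { assert (E := E1 ltac:(apply sm_odiff_s; smt H) (HYd t s Hr)
       ltac:(apply (loc_s ta tb sa sb t s); auto; intros u Hu; eapply G3_Y; eauto)).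
    rewrite (G3_eq _ _ _ _ _ H t s Hr), (v_dec _ _ _ _ _ H t s Hr) in E.
    repeat rewrite ?oinner_addl, ?oinner_scalel in E. exact E. }
  rewrite A1, A4, A5, A2 in E1'. lra.
Qed.

Lemma Cmod_cexpmi : forall x, Cmod (cexpmi x) = 1.
Proof.
  intros x. unfold Cmod, cexpmi. simpl.
  replace (cos x * (cos x * 1) + - sin x * (- sin x * 1)) with 1. apply sqrt_1.
  pose proof (sin2_cos2 x). unfold Rsqr in *. nra.
Qed.

Lemma sqrt2_pos : 0 < sqrt 2.
Proof. apply sqrt_lt_R0. lra. Qed.

Lemma Cmod_rC : forall g t s, Cmod (rC g t s) = / sqrt 2.
Proof. intros. unfold rC. rewrite Cmod_mult, Cmod_cexpmi, Cmod_R, Rabs_right.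
  ring. pose proof sqrt2_pos. apply Rle_ge, Rlt_le, Rinv_0_lt_compat; auto. Qed.
Lemma Cmod_qC : forall g t s, Cmod (qC g t s) = / sqrt 2.
Proof. intros. unfold qC. rewrite Cmod_mult, Cmod_cexpmi, Cmod_R, Rabs_right.
  ring. pose proof sqrt2_pos. apply Rle_ge, Rlt_le, Rinv_0_lt_compat; auto. Qed.

Lemma phi1_mod : forall g t s, 0 < k1 g t s -> sqrt 2 * Cmod (phi1 g t s) = k1 g t s.
Proof.
  intros. unfold phi1. rewrite Cmod_mult, Cmod_conj, Cmod_rC, Cmod_R, Rabs_right by lra.
  pose proof sqrt2_pos. field. lra.
Qed.

Lemma phi2_mod : forall g t s, 0 < kappa2 g t s -> Cmod (phi2 g t s) = kappa2 g t s.
Proof.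
  intros. unfold phi2. rewrite !Cmod_mult, Cmod_conj, Cmod_rC, Cmod_qC, Cmod_R, Rabs_right by lra.
  pose proof sqrt2_pos. replace (2 * kappa2 g t s * (/ sqrt 2 * / sqrt 2)) with
    (2 * kappa2 g t s / (sqrt 2 * sqrt 2)) by (field; lra).
  rewrite sqrt_sqrt by lra. field.
Qed.

Lemma phi3_zero : forall g t s, phi3 g t s = RtoC 0 -> alpha g t s = 0 /\ beta1 g t s + beta2 g t s = 0.
Proof.
  intros g t s H. apply (f_equal Cmod) in H. unfold phi3 in H.
  rewrite !Cmod_mult, Cmod_qC, Cmod_rC, Cmod_R, Cmod_0 in H.
  pose proof sqrt2_pos.
  assert (Cmod (2 * alpha g t s, beta1 g t s + beta2 g t s) = 0).
  { assert (Hn : Rabs (- sqrt 2) * (/ sqrt 2 * / sqrt 2 * / sqrt 2) <> 0).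
    { rewrite Rabs_Ropp, Rabs_right by lra. apply Rmult_integral_contrapositive_currified. lra.
      apply Rmult_integral_contrapositive_currified.
      apply Rmult_integral_contrapositive_currified; apply Rinv_neq_0_compat; lra.
      apply Rinv_neq_0_compat; lra. }
    apply (Rmult_eq_reg_l (Rabs (- sqrt 2) * (/ sqrt 2 * / sqrt 2 * / sqrt 2))); auto.
    rewrite Rmult_0_r, <- H. ring. }
  apply Cmod_eq_0 in H1. injection H1. intros. lra.
Qed.

Lemma R11 : forall g ta tb sa sb, Hyps g ta tb sa sb -> forall t s, in_rect ta tb sa sb t s ->
  forall Y, oinner (I1 g t s) Y = 0 -> oinner (dS (I4 g) t s) Y = 0.
Proof.
  intros g ta tb sa sb H t s Hr Y Y1. change (dS (I4 g) t s) with (dS (dS g) t s).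
  rewrite (G2_eq _ _ _ _ _ H t s Hr), oinner_scalel, Y1. ring.
Qed.

Lemma R21 : forall g ta tb sa sb, Hyps g ta tb sa sb -> forall t s, in_rect ta tb sa sb t s ->
  forall Y, oinner (I1 g t s) Y = 0 -> oinner (I6 g t s) Y = 0 ->
  oinner (dS (fun t s => oopp (I5 g t s)) t s) Y = 0.
Proof.
  intros g ta tb sa sb H t s Hr Y Y1 Y6. frame_intro (FR _ _ _ _ _ H t s Hr).
  rewrite (dSopp_eq _ _ _ _ _ H t s Hr).
  rewrite (dI5_eq _ _ _ _ _ H t s Hr), (v_dec _ _ _ _ _ H t s Hr), (G2_eq _ _ _ _ _ H t s Hr).
  xp. ip. rewrite Y1, Y6. ring.
Qed.

Lemma R12 : forall g ta tb sa sb, Hyps g ta tb sa sb -> forall t s, in_rect ta tb sa sb t s ->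
  forall Y, oinner (I1 g t s) Y = 0 -> oinner (I4 g t s) Y = 0 -> oinner (I5 g t s) Y = 0 ->
  oinner (I6 g t s) Y = 0 -> oinner (dT (I4 g) t s) Y = 0.
Proof.
  intros g ta tb sa sb H t s Hr Y Y1 Y4 Y5 Y6. frame_intro (FR _ _ _ _ _ H t s Hr).
  change (dT (I4 g) t s) with (dT (dS g) t s).
  rewrite (dTI4_eq _ _ _ _ _ H t s Hr), (G3_eq _ _ _ _ _ H t s Hr), (v_dec _ _ _ _ _ H t s Hr),
    (G2_eq _ _ _ _ _ H t s Hr).
  change (dS g t s) with (I4 g t s).
  xp. ip. rewrite Y1, Y4, Y5, Y6. ring.
Qed.

Lemma beta_rel : forall g ta tb sa sb, Hyps g ta tb sa sb -> forall t s, in_rect ta tb sa sb t s ->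
  beta2 g t s = k1 g t s + beta1 g t s.
Proof.
  intros g ta tb sa sb H t s Hr. frame_intro (FR _ _ _ _ _ H t s Hr).
  unfold beta2, beta1.
  rewrite (dI3_eq _ _ _ _ _ H t s Hr), (v_dec _ _ _ _ _ H t s Hr).
  xp. ip. nt.
  rewrite <- (phi_cyc (I6 g t s) (I1 g t s) (dS (I2 g) t s)); auto.
  rewrite C61, (oinner_sym (I7 g t s)). ring.
  apply imag_dS' with (ta := ta) (tb := tb) (sa := sa) (sb := sb); auto.
  intros; eapply im2; eapply FR; eauto.
Qed.

Lemma R22 : forall g ta tb sa sb, Hyps g ta tb sa sb -> forall t s, in_rect ta tb sa sb t s ->
  forall Y, orthY g ta tb sa sb Y -> (forall t s, in_rect ta tb sa sb t s -> odiff (Y t) s) ->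
  oinner (dT (fun t s => oopp (I5 g t s)) t s) (Y t s) =
  / k1 g t s * (- 2 * (k1 g t s) ^ 2 * kappa2 g t s * oinner (I7 g t s) (Y t s)
     - k1 g t s * kappa2 g t s * oinner (dS (I2 g) t s) (Y t s)).
Proof.
  intros g ta tb sa sb H t s Hr Y HY HYd.
  pose proof (HY t s Hr) as [Y1 [Y2 [Y4 [Y5 Y6]]]].
  pose proof (G4_Y _ _ _ _ _ Y H HY HYd t s Hr) as HG4.
  frame_intro (FR _ _ _ _ _ H t s Hr).
  rewrite (D_eq _ _ _ _ _ H t s Hr), (dTT_eq _ _ _ _ _ H t s Hr), (hfl _ _ _ _ _ H t s Hr).
  rewrite (dTI4_eq _ _ _ _ _ H t s Hr), (dTG2_eq _ _ _ _ _ H t s Hr).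
  rewrite (G3_eq _ _ _ _ _ H t s Hr), (v_dec _ _ _ _ _ H t s Hr), (G2_eq _ _ _ _ _ H t s Hr).
  change (dS g t s) with (I4 g t s).
  xp.
  rewrite (cross_cross (I4 g t s) (dS (dS (dS (dS g))) t s)); auto;
    [| apply (imag_g _ _ _ _ _ H 4); auto].
  ip. nt. rewrite HG4. ring.
Qed.

Lemma theta_cancel : forall h k : R, 0 < k ->
  sin (acos (h / sqrt (h ^ 2 + 9 / 4 * k ^ 2))) * h
  + cos (acos (h / sqrt (h ^ 2 + 9 / 4 * k ^ 2))) * (- (3 / 2) * k) = 0.
Proof.
  intros h k Hk.
  set (S := sqrt (h ^ 2 + 9 / 4 * k ^ 2)).
  assert (HS2 : S * S = h ^ 2 + 9 / 4 * k ^ 2) by (apply sqrt_sqrt; nra).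
  assert (HS : Rabs h < S).
  { unfold S. rewrite <- sqrt_Rsqr_abs. apply sqrt_lt_1_alt. unfold Rsqr. split; nra. }
  assert (HSp : 0 < S) by (pose proof (Rabs_pos h); lra).
  destruct (Rabs_def2 _ _ HS) as [HS1 HS3].
  assert (Hb : -1 <= h / S <= 1).
  { split; [apply (Rmult_le_reg_r S); auto; unfold Rdiv; rewrite Rmult_assoc, Rinv_l; lra
          | apply (Rmult_le_reg_r S); auto; unfold Rdiv; rewrite Rmult_assoc, Rinv_l; lra]. }
  rewrite cos_acos, sin_acos by auto.
  replace (1 - (h / S)²) with ((3 / 2 * k / S)²).
  - rewrite sqrt_Rsqr. field. lra.
    apply Rmult_le_pos; [lra | apply Rlt_le, Rinv_0_lt_compat; auto].
  - unfold Rsqr, Rdiv. assert (Hu : S * / S = 1) by (field; lra).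
    set (u := / S) in *.
    assert (E : (S * S) * (u * u) = 1).
    { replace ((S * S) * (u * u)) with ((S * u) * (S * u)) by ring. rewrite Hu. ring. }
    rewrite <- E, HS2. field.
Qed.

Lemma R22_I3 : forall g ta tb sa sb, Hyps g ta tb sa sb -> forall t s, in_rect ta tb sa sb t s ->
  oinner (dT (fun t s => oopp (I5 g t s)) t s) (I3 g t s) = 0.
Proof.
  intros g ta tb sa sb H t s Hr. frame_intro (FR _ _ _ _ _ H t s Hr).
  rewrite (R22 _ _ _ _ _ H t s Hr (I3 g)); [| apply orthY_I3; auto | intros; eapply I3_odiff; eauto].
  rewrite N73. change (oinner (dS (I2 g) t s) (I3 g t s)) with (alpha g t s).
  destruct (phi3_zero g t s (hph3 _ _ _ _ _ H t s Hr)) as [Ha _]. rewrite Ha. ring.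
Qed.

Lemma R22_I7 : forall g ta tb sa sb, Hyps g ta tb sa sb -> forall t s, in_rect ta tb sa sb t s ->
  oinner (dT (fun t s => oopp (I5 g t s)) t s) (I7 g t s) = - (3 / 2) * k1 g t s * kappa2 g t s.
Proof.
  intros g ta tb sa sb H t s Hr. frame_intro (FR _ _ _ _ _ H t s Hr).
  rewrite (R22 _ _ _ _ _ H t s Hr (I7 g)); [| apply orthY_I7; auto | intros; eapply I7_odiff; eauto].
  rewrite N77. change (oinner (dS (I2 g) t s) (I7 g t s)) with (beta1 g t s).
  destruct (phi3_zero g t s (hph3 _ _ _ _ _ H t s Hr)) as [_ Hb].
  rewrite (beta_rel _ _ _ _ _ H t s Hr) in Hb.
  assert (beta1 g t s = - k1 g t s / 2) by lra. rewrite H0.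
  pose proof (hk1 _ _ _ _ _ H t s Hr). field. lra.
Qed.

Theorem proposition4 (gamma : R -> R -> oct) (ta tb sa sb : Rbar)
  (Hs0 : Rbar_lt sa (Finite 0) /\ Rbar_lt (Finite 0) sb)
  (Hsmooth : forall t s : R, in_rect ta tb sa sb t s -> smooth_at gamma t s)
  (Himag : forall t s : R, in_rect ta tb sa sb t s -> is_imag (gamma t s))
  (Hflow : forall t s : R, in_rect ta tb sa sb t s ->
       dT gamma t s = ocross (dS gamma t s) (dS (dS gamma) t s))
  (Hunit : forall t s : R, in_rect ta tb sa sb t s -> onorm (dS gamma t s) = 1)
  (Hk1 : forall t s : R, in_rect ta tb sa sb t s -> 0 < k1 gamma t s)
  (Hk2 : forall t s : R, in_rect ta tb sa sb t s -> 0 < kappa2 gamma t s)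
  (Hphi3 : forall t s : R, in_rect ta tb sa sb t s -> phi3 gamma t s = RtoC 0)
  (Hphi2 : forall t s : R, in_rect ta tb sa sb t s -> phi2 gamma t s <> RtoC 0) :
  forall t s : R, in_rect ta tb sa sb t s ->
    forall i j : nat, (i = 1 \/ i = 2)%nat -> (j = 1 \/ j = 2)%nat ->
      hcoef gamma (Etilde gamma) 6 i j t s = 0 /\
      hcoef gamma (Etilde gamma) 7 i j t s = 0.

Proof.
  intros t s Hr i j Hi Hj.
  assert (H : Hyps gamma ta tb sa sb) by (constructor; auto).
  pose proof (FR _ _ _ _ _ H t s Hr) as fr. frame_intro fr.
  pose proof (hk1 _ _ _ _ _ H t s Hr) as Kp1. pose proof (hk2 _ _ _ _ _ H t s Hr) as Kp2.
  pose proof (phi1_mod gamma t s Kp1) as Hd.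
  destruct Hi as [-> | ->]; destruct Hj as [-> | ->]; unfold hcoef, Etilde, Eframe; cbv beta iota;
    rewrite ?Hd, ?oinner_addr, ?oinner_scaler.
  - rewrite !(R11 _ _ _ _ _ H t s Hr); auto. split; ring.
  - rewrite !(R12 _ _ _ _ _ H t s Hr); auto. unfold Rdiv. split; ring.
  - rewrite !(R21 _ _ _ _ _ H t s Hr); auto. split; ring.
  - split.
    + rewrite (R22_I3 _ _ _ _ _ H t s Hr). unfold Rdiv; ring.
    + rewrite (R22_I7 _ _ _ _ _ H t s Hr).
      unfold theta, hcoef, Eframe. rewrite Hd, (phi2_mod gamma t s Kp2).
      set (h := oinner (dT (fun t s => oopp (I5 gamma t s)) t s) (I2 gamma t s) / k1 gamma t s).
      replace (oinner (dT (fun t s => oopp (I5 gamma t s)) t s) (I2 gamma t s)) with (h * k1 gamma t s)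
        by (unfold h; field; lra).
      pose proof (theta_cancel h (kappa2 gamma t s) Kp2) as Hc.
      transitivity (k1 gamma t s * (sin (acos (h / sqrt (h ^ 2 + 9 / 4 * kappa2 gamma t s ^ 2))) * h +
        cos (acos (h / sqrt (h ^ 2 + 9 / 4 * kappa2 gamma t s ^ 2))) * (- (3 / 2) * kappa2 gamma t s))
        / k1 gamma t s).
      * field. lra.
      * rewrite Hc. field. lra.
Qed.
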